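(* Let $\mathcal{C}$ be a cyclic code of length $n$ over $\mathbb{F}_q$ with $\gcd(n,q)=1$, let $m$ be the multiplicative order of $q$ modulo $n$, and let $\alpha\in\mathbb{F}_{q^m}$ be a primitive $n$-th root of unity. Let $n_1$ be a positive divisor of $n$, put $\nu=n/n_1$ and $\beta=\alpha^{\nu}$. For $0\le i\le \nu-1$ let $\mathcal{I}_i=\{i,i+\nu,i+2\nu,\ldots,i+n-\nu\}$ and let $\mathcal{C}_{\mathcal{I}_i}=\{(c_i,c_{i+\nu},\ldots,c_{i+n-\nu}) : (c_0,\ldots,c_{n-1})\in\mathcal{C}\}$ be the code punctured to $\mathcal{I}_i$ (a cyclic code of length $n_1$). Then $$\mathcal{S}(\mathcal{C}_{\mathcal{I}_i})=\big\{\lambda \bmod n_1 : \{\lambda,\lambda+n_1,\ldots,\lambda+(\nu-1)n_1\}\subseteq \mathcal{S}(\mathcal{C})\big\},$$ i.e. for $\lambda\in\{0,\ldots,n_1-1\}$ we have $\lambda\in\mathcal{S}(\mathcal{C}_{\mathcal{I}_i})$ if and only if $\lambda+jn_1\in\mathcal{S}(\mathcal{C})$ for all $j=0,1,\ldots,\nu-1$.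
   Context: For a cyclic code $\mathcal{C}$ of length $n$ over $\mathbb{F}_q$ with $\gcd(n,q)=1$ and a primitive $n$-th root of unity $\alpha$, identify a codeword $\underline{c}=(c_0,\ldots,c_{n-1})$ with $c(x)=\sum_{i=0}^{n-1}c_ix^i$. The set of zeros of $\mathcal{C}$ is $\mathcal{S}(\mathcal{C})=\{j\in\{0,\ldots,n-1\} : c(\alpha^j)=0 \text{ for all } \underline{c}\in\mathcal{C}\}$. For the length-$n_1$ punctured code, zeros are computed with respect to $\beta=\alpha^{n/n_1}$: $\mathcal{S}(\mathcal{C}_{\mathcal{I}_i})=\{\lambda\in\{0,\ldots,n_1-1\}: \sum_{t=0}^{n_1-1}a_t\beta^{\lambda t}=0 \text{ for all } (a_0,\ldots,a_{n_1-1})\in \mathcal{C}_{\mathcal{I}_i}\}$. *)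

(* Defs.v *)
From HB Require Import structures.
From mathcomp Require Import all_boot all_order all_algebra all_field.
Set Implicit Arguments. Unset Strict Implicit. Unset Printing Implicit Defensive.
Import GRing.Theory.
Local Open Scope ring_scope.

Definition rowcoef (F : Type) (n : nat) (c : 'rV[F]_n) (k : nat) (d : F) : F :=
  if insub k is Some j then c 0 j else d.

Definition coef_at (F : nmodType) (n : nat) (c : 'rV[F]_n) (k : nat) : F :=
  rowcoef c k 0.

Definition cshift (F : nmodType) (n : nat) (c : 'rV[F]_n) : 'rV[F]_n :=
  \row_(i < n) coef_at c ((i + n - 1) %% n).

Definition is_cyclic_code (F : fieldType) (n : nat) (C : {vspace 'rV[F]_n}) : Prop :=
  forall c, c \in C -> cshift c \in C.

Definition word_eval (F : fieldType) (L : fieldExtType F) (k : nat)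
  (c : 'rV[F]_k) (w : L) : L :=
  \sum_(t < k) (c 0 t)%:A * w ^+ t.

Definition is_zero_of (F : fieldType) (L : fieldExtType F) (k : nat)
  (P : 'rV[F]_k -> Prop) (w : L) (j : nat) : Prop :=
  forall c, P c -> word_eval c (w ^+ j) = 0.

Definition puncture (F : nmodType) (n n1 nu i : nat) (c : 'rV[F]_n) : 'rV[F]_n1 :=
  \row_(t < n1) coef_at c (i + t * nu).

Definition punctured_code (F : fieldType) (n n1 nu i : nat)
  (C : {vspace 'rV[F]_n}) : 'rV[F]_n1 -> Prop :=
  fun a => exists2 c, c \in C & a = puncture n1 nu i c.

(* Main.v *)
Require Import Defs.
From HB Require Import structures.
From mathcomp Require Import all_boot all_order all_algebra all_field.
From mathcomp Require Import zify.
Import GRing.Theory.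
Local Open Scope ring_scope.

Lemma sum_decomp (V : nmodType) (n1 nu : nat) (f : nat -> V) :
  \sum_(s < nu * n1) f s = \sum_(i' < nu) \sum_(t < n1) f (i' + t * nu)%N.
Proof.
rewrite -(big_mkord xpredT f) mulnC big_nat_mul big_mkord exchange_big /=.
apply: eq_bigr => t _.
rewrite mulSn addnC -{1}(add0n (t * nu)%N) big_addn.
by rewrite addKn big_mkord.
Qed.

Lemma word_eval_nat (F : fieldType) (L : fieldExtType F) (k : nat) (c : 'rV[F]_k) (w : L) :
  word_eval c w = \sum_(s < k) (coef_at c s)%:A * w ^+ s.
Proof. by apply: eq_bigr => s _; rewrite /coef_at /rowcoef valK. Qed.

Lemma word_eval_punct (F : fieldType) (L : fieldExtType F) n n1 nu i (c : 'rV[F]_n) (w : L) :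
  word_eval (puncture n1 nu i c) w = \sum_(t < n1) (coef_at c (i + t * nu))%:A * w ^+ t.
Proof. by apply: eq_bigr => s _; rewrite mxE. Qed.

Lemma coef_cshift (F : nmodType) n (c : 'rV[F]_n) s : (s < n)%N ->
  coef_at (cshift c) s = coef_at c ((s + n - 1) %% n).
Proof.
move=> sn; rewrite /coef_at /rowcoef insubT /= mxE //.
Qed.

Lemma coef_iter (F : nmodType) n (c : 'rV[F]_n) r s : (0 < n)%N -> (s < n)%N ->
  coef_at (iter r (@cshift F n) c) s = coef_at c ((s + r * (n - 1)) %% n).
Proof.
move=> n0; elim: r s => [|r IH] s sn /=.
  by rewrite mul0n addn0 modn_small.
rewrite coef_cshift // IH ?ltn_pmod // modnDml.
congr (coef_at c (_ %% n)); lia.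
Qed.

Lemma sum_decomp' (V : nmodType) (N n1 nu : nat) (f : nat -> V) : N = (nu * n1)%N ->
  \sum_(s < N) f s = \sum_(i' < nu) \sum_(t < n1) f (i' + t * nu)%N.
Proof. by move=> ->; apply: sum_decomp. Qed.
Theorem lemma2 (F : finFieldType) (L : fieldExtType F) (n : nat)
  (C : {vspace 'rV[F]_n}) (m : nat) (alpha : L) (n1 : nat) (i : nat) :
  (0 < n)%N ->
  coprime n #|F| ->
  is_cyclic_code C ->
  (0 < m)%N -> (#|F| ^ m = 1 %[mod n])%N ->
  (forall k, (0 < k)%N -> (#|F| ^ k = 1 %[mod n])%N -> (m <= k)%N) ->
  \dim {:L} = m ->
  n.-primitive_root alpha ->
  (0 < n1)%N -> (n1 %| n)%N ->
  let nu := (n %/ n1)%N in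
  let beta := alpha ^+ nu in
  (i < nu)%N ->
  forall lambda : nat, (lambda < n1)%N ->
    (is_zero_of (@punctured_code F n n1 nu i C) beta lambda <->
     forall j : nat, (j < nu)%N ->
       is_zero_of (fun c => c \in C) alpha (lambda + j * n1)%N).
Proof.
move=> n0 _ cyc _ _ _ _ prim n10 dvd nu beta inu lam laml.
have nE : n = (nu * n1)%N by rewrite /nu divnK.
have a1 : alpha ^+ n = 1 by apply: prim_expr_order.
have expE : forall a b k, (a = b + k * n)%N -> alpha ^+ a = alpha ^+ b.
  by move=> a b k ->; rewrite exprD mulnC exprM a1 expr1n mulr1.
have iterC : forall r c, c \in C -> iter r (@cshift F n) c \in C.
  by move=> r c cC; elim: r => [|r IH] //=; apply: cyc.
split.
- move=> HP j jnu c cC.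
  rewrite word_eval_nat (@sum_decomp' _ _ _ _ (fun s => (coef_at c s)%:A * (alpha ^+ (lam + j*n1)) ^+ s) nE) big1 // => i' _.
  pose r := (i + n - i')%N.
  have := HP (puncture n1 nu i (iter r (@cshift F n) c)).
  have Hin : punctured_code nu i C (puncture n1 nu i (iter r (@cshift F n) c)).
    by exists (iter r (@cshift F n) c) => //; apply: iterC.
  move=> /(_ Hin); rewrite word_eval_punct => H0.
  have -> : \sum_(t < n1) (coef_at c (i' + t * nu))%:A * (alpha ^+ (lam + j * n1)) ^+ (i' + t * nu)
     = alpha ^+ ((lam + j * n1) * i') * \sum_(t < n1) (coef_at (iter r (@cshift F n) c) (i + t * nu))%:A * (beta ^+ lam) ^+ t.
    rewrite big_distrr; apply: eq_bigr => t _ /=.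
    have ti : (t < n1)%N := ltn_ord t.
    have i'i : (i' < nu)%N := ltn_ord i'.
    rewrite coef_iter //; last by rewrite nE; nia.
    have -> : ((i + t * nu + r * (n - 1)) %% n = i' + t * nu)%N.
      rewrite -[RHS](@modn_small _ n); last by rewrite nE; nia.
      apply/eqP; rewrite -(eqn_modDr r).
      have -> : (i + t * nu + r * (n - 1) + r = (i + t * nu) + r * n)%N.
        rewrite /r; clear -n0; nia.
      have -> : (i' + t * nu + r = (i + t * nu) + 1 * n)%N.
        have : (nu <= n)%N by rewrite nE; nia.
        rewrite /r; lia.
      by rewrite ![(_ + _ * n)%N]addnC !modnMDl.
    rewrite mulrCA; congr (_ * _).
    rewrite /beta -!exprM -exprD; apply: (expE _ _ (j * t)%N).
    rewrite nE; nia.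
  by rewrite H0 mulr0.
- move=> H a [c cC ->]; rewrite word_eval_punct.
  set S := \sum_(t < n1) _.
  have nunz : nu%:R != 0 :> L.
    by rewrite (prim_root_dvd_eq0 prim) // nE dvdn_mulr.
  have chs : forall e, \sum_(j < nu) alpha ^+ ((lam + j * n1) * e)
      = alpha ^+ (lam * e) * \sum_(j < nu) (alpha ^+ (n1 * e)) ^+ j.
    move=> e; rewrite big_distrr; apply: eq_bigr => j _.
    rewrite /= -exprM -exprD; congr (_ ^+ _); nia.
  have g1 : forall e, (nu %| e)%N -> alpha ^+ (n1 * e) = 1.
    move=> e /dvdnP [k ->]; rewrite -(expr0 alpha) ; apply: (expE _ _ k); rewrite nE; nia.
  have gnu : forall e, (alpha ^+ (n1 * e)) ^+ nu = 1.
    move=> e; rewrite -(expr0 alpha) -exprM; apply: (expE _ _ e); rewrite nE; nia.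
  have gne : forall e, ~~ (nu %| e)%N -> alpha ^+ (n1 * e) != 1.
    move=> e; apply: contra; rewrite -(prim_order_dvd prim) nE (mulnC nu) dvdn_pmul2l //.
  have geo : forall e, ~~ (nu %| e)%N -> \sum_(j < nu) (alpha ^+ (n1 * e)) ^+ j = 0.
    move=> e /gne ge; have := subrX1 (alpha ^+ (n1 * e)) nu.
    rewrite gnu subrr => /esym /eqP; rewrite mulf_eq0 subr_eq0 (negbTE ge) /=.
    by move/eqP.
  have dv : forall (i' : 'I_nu) t, (t < n1)%N ->
      (nu %| (n - i + i' + t * nu))%N = (nat_of_ord i' == i).
    move=> i' t tn; have i'i : (i' < nu)%N := ltn_ord i'.
    have -> : (n - i + i' + t * nu = (nu - i + i') + (n1 - 1 + t) * nu)%N.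
      rewrite nE; nia.
    rewrite dvdn_addl ?dvdn_mull //.
    case: eqP => [-> | ne]; first by rewrite subnK ?dvdnn // ltnW.
    apply/negP => /dvdnP [k kE]; apply: ne; move: kE; case: k => [|[|k]] kE; nia.
  have key : \sum_(j < nu) alpha ^+ ((lam + j * n1) * (n - i)) *
        word_eval c (alpha ^+ (lam + j * n1)) = nu%:R * S.
    rewrite (eq_bigr (fun j : 'I_nu => \sum_(i' < nu) \sum_(t < n1)
        (coef_at c (i' + t * nu))%:A * alpha ^+ ((lam + j * n1) * (n - i + i' + t * nu)))); last first.
      move=> j _; rewrite word_eval_nat
        (@sum_decomp' _ _ _ _ (fun s => (coef_at c s)%:A * (alpha ^+ (lam + j*n1)) ^+ s) nE).
      rewrite big_distrr; apply: eq_bigr => i' _; rewrite big_distrr; apply: eq_bigr => t _ /=.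
      rewrite mulrCA -!exprM -exprD; congr (_ * (alpha ^+ _)).
      by rewrite -mulnDr !addnA.
    rewrite exchange_big /=.
    under eq_bigr => i' _ do rewrite exchange_big /=.
    under eq_bigr => i' _ do under eq_bigr => t _ do rewrite -big_distrr /= chs.
    rewrite (bigD1 (Ordinal inu)) //= [X in _ + X]big1 ?addr0; last first.
      move=> i' ne; apply: big1 => t _.
      rewrite geo ?mulr0 ?mulr0 // dv //.
    rewrite /S big_distrr; apply: eq_bigr => t _ /=.
    rewrite g1; last by have := dv (Ordinal inu) t (ltn_ord t); rewrite eqxx.
    under eq_bigr => j _ do rewrite expr1n.
    rewrite sumr_const card_ord [RHS]mulrCA; congr (_ * _).
    rewrite mulrC; congr (_ * _).
    rewrite /beta -!exprM; apply: (expE _ _ lam); rewrite nE; nia.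
  apply/eqP; move: key; rewrite big1; last by move=> j _; rewrite H ?mulr0.
  by move/esym/eqP; rewrite mulf_eq0 (negbTE nunz).
Qed.
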